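(* Let $r\ge 1$, $N\ge 1$ and $n\ge 1$ be integers. Then $$B_{N,n}^{(r)}=n!\sum_{k=1}^{n}(-1)^k\sum_{\substack{e_1+\cdots+e_k=n\\ e_1,\dots,e_k\ge 1}}M_r(e_1)\cdots M_r(e_k),$$ where for an integer $e\ge 0$, $$M_r(e)=\sum_{\substack{i_1+\cdots+i_r=e\\ i_1,\dots,i_r\ge 0}}\frac{(N!)^r}{(N+i_1)!\cdots(N+i_r)!}.$$
   Context: For positive integers $N$ and $r$, the higher order hypergeometric Bernoulli numbers $B^{(r)}_{N,n}$ ($n\ge0$) are defined by $$\left(\frac{x^N/N!}{e^x-\sum_{n=0}^{N-1}x^n/n!}\right)^r=\sum_{n=0}^\infty B_{N,n}^{(r)}\frac{x^n}{n!}.$$ *)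

(* Defs.v *)
From mathcomp Require Import all_boot all_order all_algebra.
Set Implicit Arguments. Unset Strict Implicit. Unset Printing Implicit Defensive.
Import Order.TTheory GRing.Theory Num.Theory.
Local Open Scope ring_scope.

(* Formal power series over the rationals, represented by their coefficient
   sequences: a : nat -> rat stands for \sum_n a n x^n. *)
Definition fps := nat -> rat.

Definition fps_one : fps := fun n => (n == 0%N)%:R.

Definition fps_mul (a b : fps) : fps :=
  fun n => \sum_(i < n.+1) a i * b (n - i)%N.

Definition fps_pow (a : fps) (r : nat) : fps := iter r (fps_mul a) fps_one.

(* Quotient a / b of formal power series, where b has valuation v
   (b v <> 0, b i = 0 for i < v) and a is divisible by x^v. *)
Fixpoint fps_div_coefs (a b : fps) (v k : nat) : seq rat :=
  match k with
  | 0 => [::]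
  | k'.+1 =>
      let s := fps_div_coefs a b v k' in
      rcons s ((a (k' + v)%N - \sum_(i < k') s`_i * b (k' + v - i)%N) / b v)
  end.

Definition fps_div (a b : fps) (v : nat) : fps :=
  fun n => (fps_div_coefs a b v n.+1)`_n.

Definition hb_num (N : nat) : fps :=
  fun n => if n == N then (N`!%:R)^-1 else 0.

Definition hb_den (N : nat) : fps :=
  fun n => if (N <= n)%N then (n`!%:R)^-1 else 0.

(* Higher order hypergeometric Bernoulli numbers B^{(r)}_{N,n}:
   n! times the n-th coefficient of ((x^N/N!)/(e^x - \sum_{n<N} x^n/n!))^r. *)
Definition hbernoulli (N r n : nat) : rat :=
  n`!%:R * fps_pow (fps_div (hb_num N) (hb_den N) N) r n.

Definition Mr (N r e : nat) : rat :=
  \sum_(i : {ffun 'I_r -> 'I_e.+1} | (\sum_(j < r) (i j : nat))%N == e)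
     (N`!%:R ^+ r) / \prod_(j < r) ((N + i j)`!)%:R.

(* Main.v *)
Require Import Defs.
From mathcomp Require Import all_boot all_order all_algebra.
From mathcomp Require Import zify ring.
Import Order.TTheory GRing.Theory Num.Theory.
Local Open Scope ring_scope.

Definition eqm (m : nat) (p q : {poly rat}) := forall i, (i < m)%N -> p`_i = q`_i.

Lemma eqm_mul m p p' q q' : eqm m p p' -> eqm m q q' -> eqm m (p * q) (p' * q').
Proof.
move=> Hp Hq i lim; rewrite !coefM; apply: eq_bigr => j _.
have := ltn_ord j => hj.
rewrite Hp ?Hq //; lia.
Qed.

Lemma eqm_exp m p q k : eqm m p q -> eqm m (p ^+ k) (q ^+ k).
Proof.
move=> H; elim: k => [|k IH]; first by move=> i _; rewrite !expr0.
by rewrite !exprS; apply: eqm_mul.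
Qed.

Lemma eqm_poly m p : eqm m p (\poly_(i < m) p`_i).
Proof. by move=> i lim; rewrite coef_poly lim. Qed.

Lemma fps_pow_coef (a : fps) m r i : (i < m)%N ->
  fps_pow a r i = ((\poly_(j < m) a j) ^+ r)`_i.
Proof.
elim: r i => [|r IH] i lim.
  by rewrite /fps_pow /= expr0 coef1 /fps_one.
rewrite exprS coefM /fps_pow iterS -/(fps_pow a r) /fps_mul.
apply: eq_bigr => j _; have := ltn_ord j => hj.
rewrite coef_poly IH; last lia.
by have -> : (j < m)%N by lia.
Qed.

Lemma coef_exp_ffun (p : {poly rat}) k n :
  (p ^+ k)`_n = \sum_(f : {ffun 'I_k -> 'I_n.+1} | (\sum_(j < k) (f j : nat))%N == n)
     \prod_(j < k) p`_(f j).
Proof.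
set p' := \poly_(i < n.+1) p`_i.
have -> : (p ^+ k)`_n = (p' ^+ k)`_n by apply: eqm_exp (eqm_poly _ _) _ _.
have -> : p' ^+ k = \prod_(j < k) p' by rewrite prodr_const card_ord.
rewrite /p' poly_def bigA_distr_bigA /= coef_sum [RHS]big_mkcond /=.
apply: eq_bigr => f _.
have -> : \prod_(i < k) (p`_(f i) *: 'X^(f i)) =
   (\prod_(i < k) p`_(f i))%:P * 'X^(\sum_(i < k) (f i : nat)).
  rewrite -prodrXr rmorph_prod -big_split /=.
  by apply: eq_bigr => i _; rewrite mul_polyC.
rewrite coefCM coefXn eq_sym.
by case: eqP => _; rewrite ?mulr1 ?mulr0.
Qed.

Lemma size_coefs a b v k : size (fps_div_coefs a b v k) = k.
Proof. by elim: k => [|k IH] //=; rewrite size_rcons IH. Qed.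

Lemma nth_coefs a b v k i : (i < k)%N -> (fps_div_coefs a b v k)`_i = fps_div a b v i.
Proof.
elim: k => [|k IH] // lik.
rewrite /= nth_rcons size_coefs.
case: (ltnP i k) => hik; first exact: IH.
have -> : i = k by lia.
by rewrite eqxx /fps_div /= nth_rcons size_coefs ltnn eqxx.
Qed.

Lemma fps_div_rec a b v k : b v != 0 ->
  \sum_(i < k.+1) fps_div a b v i * b (k + v - i)%N = a (k + v)%N.
Proof.
move=> hb; rewrite big_ord_recr /= addKn.
rewrite {2}/fps_div /= nth_rcons size_coefs ltnn eqxx divfK //.
under eq_bigr => i _ do rewrite -(@nth_coefs a b v k i (ltn_ord i)).
by rewrite addrC subrK.
Qed.

Definition Gp (N m : nat) : {poly rat} := \poly_(i < m) (N`!%:R / (N + i)`!%:R).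

Lemma fact_neq0 k : (k`!%:R : rat) != 0.
Proof. by rewrite pnatr_eq0 -lt0n fact_gt0. Qed.

Lemma QG N m : eqm m (\poly_(i < m) fps_div (hb_num N) (hb_den N) N i * Gp N m) 1.
Proof.
move=> k lkm; rewrite coefM coef1.
transitivity (N`!%:R * \sum_(i < k.+1) fps_div (hb_num N) (hb_den N) N i * hb_den N (k + N - i)%N).
  rewrite mulr_sumr; apply: eq_bigr => i _; have := ltn_ord i => hi.
  rewrite !coef_poly /hb_den.
  have -> : (i < m)%N by lia.
  have -> : (k - i < m)%N by lia.
  have -> : (N <= k + N - i)%N by lia.
  have -> : (k + N - i = N + (k - i))%N by lia.
  by rewrite mulrCA.
rewrite fps_div_rec; last by rewrite /hb_den leqnn invr_eq0 fact_neq0.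
rewrite /hb_num; case: k lkm => [|k] _ /=.
  by rewrite add0n eqxx divff // fact_neq0.
have -> : (k.+1 + N == N) = false by apply/eqP; lia.
by rewrite mulr0.
Qed.

Lemma G0 N m r : (0 < m)%N -> ((Gp N m) ^+ r)`_0 = 1.
Proof.
move=> hm; elim: r => [|r IH]; first by rewrite expr0 coef1.
by rewrite exprS coef0M IH coef_poly hm addn0 divff ?mulr1 // fact_neq0.
Qed.

Lemma GM N m r t : (t < m)%N -> ((Gp N m) ^+ r)`_t = Mr N r t.
Proof.
move=> htm; rewrite coef_exp_ffun /Mr; apply: eq_bigr => f _.
have -> : (N`!%:R : rat) ^+ r = \prod_(j < r) (N`!%:R : rat) by rewrite prodr_const card_ord.
rewrite -prodfV -big_split /=.
apply: eq_bigr => j _; rewrite coef_poly.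
have := ltn_ord (f j) => hf.
by have -> : (f j < m)%N by lia.
Qed.

Lemma tele (x : {poly rat}) m : (1 + x) * \sum_(k < m) (-x)^+k = 1 - (-x)^+m.
Proof.
elim: m => [|m IH]; first by rewrite big_ord0 expr0 mulr0 subrr.
rewrite big_ord_recr /= mulrDr IH exprS.
set y := (-x)^+m; ring.
Qed.

Lemma negexp_coef (p : {poly rat}) k n : ((-p)^+k)`_n = (-1)^+k * (p^+k)`_n.
Proof. by rewrite -scaleN1r exprZn coefZ. Qed.

Lemma Hzero (H P : {poly rat}) m i : H`_0 = 0 -> (i < m)%N -> (P * (-H)^+m)`_i = 0.
Proof.
move=> H0 him.
have /factor_theorem [q Hq] : root H 0 by rewrite /root horner_coef0 H0.
rewrite Hq subr0 -mulNr exprMn mulrA coefMXn him //.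
Qed.

Lemma comb (H : {poly rat}) (F : nat -> rat) n k : H`_0 = 0 ->
  (forall t, (0 < t)%N -> (t < n.+1)%N -> H`_t = F t) ->
  (H^+k)`_n = \sum_(e : {ffun 'I_k -> 'I_n.+1} |
              ((\sum_(j < k) (e j : nat))%N == n) && [forall j, (0 < e j)%N])
        \prod_(j < k) F (e j).
Proof.
move=> H0 HF; rewrite coef_exp_ffun (bigID (fun e : {ffun 'I_k -> 'I_n.+1} => [forall j, (0 < e j)%N])) /=.
rewrite [X in _ + X]big1 ?addr0.
  apply: eq_bigr => e /andP[_ /forallP Hpos]; apply: eq_bigr => j _.
  by apply: HF.
move=> e /andP[_ /forallPn [j Hj]].
rewrite (bigD1 j) //=.
have -> : (e j : nat) = 0%N by move: Hj; rewrite lt0n negbK => /eqP.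
by rewrite H0 mul0r.
Qed.

Theorem proposition7 (r N n : nat) (hr : (1 <= r)%N) (hN : (1 <= N)%N)
    (hn : (1 <= n)%N) :
  hbernoulli N r n =
    n`!%:R *
    \sum_(1 <= k < n.+1)
      (-1) ^+ k *
      \sum_(e : {ffun 'I_k -> 'I_n.+1} |
              ((\sum_(j < k) (e j : nat))%N == n) && [forall j, (0 < e j)%N])
        \prod_(j < k) Mr N r (e j).
Proof.
set q := fps_div (hb_num N) (hb_den N) N.
set m := n.+1.
set Q := \poly_(i < m) q i.
set G := Gp N m.
set H := G ^+ r - 1.
have H0 : H`_0 = 0 by rewrite coefB G0 // coef1 subrr.
have HM t : (0 < t)%N -> (t < m)%N -> H`_t = Mr N r t.
  move=> t0 tm; rewrite coefB GM // coef1.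
  have -> : (t == 0)%N = false by lia.
  by rewrite subr0.
have QGr : eqm m (Q ^+ r * G ^+ r) 1.
  by have := @eqm_exp m _ _ r (QG N m); rewrite expr1n exprMn.
have key : eqm m (Q ^+ r) (\sum_(k < m) (-H)^+k).
  move=> i hi.
  have E : Q^+r - Q^+r * (-H)^+m = (Q^+r * G^+r) * \sum_(k < m) (-H)^+k.
    by rewrite -mulrA -[G^+r](subrK 1) -/H [H + 1]addrC tele mulrBr mulr1.
  have := f_equal (fun p : {poly rat} => p`_i) E.
  rewrite /= coefB Hzero // subr0 => ->.
  by rewrite (@eqm_mul _ _ _ _ _ QGr (fun j _ => erefl _)) // mul1r.
rewrite /hbernoulli -/q (fps_pow_coef q m r n (ltnSn n)) -/Q key //.
rewrite coef_sum big_ord_recl /= expr0 coef1.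
have -> : (n == 0)%N = false by lia.
rewrite add0r big_add1 /= big_mkord; congr (_ * _).
apply: eq_bigr => k _; rewrite negexp_coef; congr (_ * _).
exact: comb.
Qed.
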